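(* Let $\Omega\subset\mathbb{R}^d$ be compact, $\mu$ a probability measure on $\Omega$, $X_N$ an $N$-dimensional subspace of real-valued continuous functions on $\Omega$ (also $N$-dimensional in $L_2(\Omega,\mu)$), and $M$ a nonnegative integer. Then for every real continuous function $\mathcal K$ on $\Omega\times\Omega$, $$\sigma_M^c(\mathcal K)_{(\infty,1)}=\sigma_M^\perp(\mathcal K)_{(\infty,1)}.$$
   Context: $\|\cdot\|_1$ is the norm of $L_1(\Omega,\mu)$. Let $\mathcal{B}_M(X_N^\perp)$ be the set of all functions $\mathcal{W}(\mathbf x,\mathbf y)=\sum_{i=1}^M w_i(\mathbf x)v_i(\mathbf y)$ with $w_i\in\mathcal C(\Omega)$ and $v_i\in L_1(\Omega,\mu)$ such that for every $f\in X_N$ and every $\mathbf x\in\Omega$, $\int_\Omega\mathcal W(\mathbf x,\mathbf y)f(\mathbf y)\,d\mu(\mathbf y)=0$. Define $$\sigma_M^c(\mathcal K)_{(\infty,1)}:=\inf_{\mathcal W\in\mathcal B_M(X_N^\perp)}\sup_{\mathbf x\in\Omega}\|\mathcal K(\mathbf x,\cdot)-\mathcal W(\mathbf x,\cdot)\|_1,$$ $$\sigma_M^\perp(\mathcal K)_{(\infty,1)}:=\inf\ \sup_{\mathbf x\in\Omega}\Big\|\mathcal K(\mathbf x,\cdot)-\sum_{i=1}^M w_i(\mathbf x)v_i(\cdot)\Big\|_1,$$ where the last infimum is over all $w_1,\dots,w_M\in\mathcal C(\Omega)$ and all $v_1,\dots,v_M\in L_1(\Omega,\mu)\cap X_N^\perp$,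 i.e. $\int_\Omega v_if\,d\mu=0$ for all $f\in X_N$. *)

(* Defs.v *)
From HB Require Import structures.
From mathcomp Require Import all_boot all_order all_algebra.
From mathcomp Require Import all_classical all_reals all_analysis.
Set Implicit Arguments. Unset Strict Implicit. Unset Printing Implicit Defensive.
Import Order.TTheory GRing.Theory Num.Theory.
Import numFieldNormedType.Exports.
Local Open Scope classical_set_scope.
Local Open Scope ring_scope.

Definition Rd (R : realType) (d : nat) := g_sigma_algebraType (@open 'rV[R]_d).
HB.instance Definition _ (R : realType) (d : nat) :=
  NormedModule.copy (Rd R d) 'rV[R]_d.

Section defs.
Context {R : realType} {d : nat}.
Local Notation V := (Rd R d).

(* X_N = span of the basis phi_1..phi_N *)
Definition span_fun (N : nat) (phi : 'I_N -> V -> R) : set (V -> R) :=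
  [set f | exists c : 'I_N -> R, f = fun y => \sum_(j < N) c j * phi j y].

Definition orth_XN (mu : {measure set V -> \bar R}) (Omega : set V)
  (N : nat) (phi : 'I_N -> V -> R) (v : V -> R) : Prop :=
  forall f, span_fun phi f -> (\int[mu]_(y in Omega) (v y * f y)%:E = 0)%E.

Definition sup_L1_err (mu : {measure set V -> \bar R}) (Omega : set V)
  (K : V -> V -> R) (M : nat) (w v : 'I_M -> V -> R) : \bar R :=
  ereal_sup [set (\int[mu]_(y in Omega)
                    (`| K x y - \sum_(i < M) w i x * v i y |)%:E)%E
            | x in Omega].

(* sigma_M^c(K)_(oo,1): infimum over W = sum_i w_i (x) v_i in B_M(X_N^perp),
   i.e. w_i in C(Omega), v_i in L_1(Omega,mu), and
   int_Omega W(x,y) f(y) dmu(y) = 0 for all f in X_N and all x in Omega. *)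
Definition sigma_c (mu : {measure set V -> \bar R}) (Omega : set V)
  (N : nat) (phi : 'I_N -> V -> R) (K : V -> V -> R) (M : nat) : \bar R :=
  ereal_inf [set e | exists (w v : 'I_M -> V -> R),
    [/\ forall i, {within Omega, continuous (w i)},
        forall i, mu.-integrable Omega (EFin \o v i),
        forall x, Omega x ->
          orth_XN mu Omega phi (fun y => \sum_(i < M) w i x * v i y)
      & e = sup_L1_err mu Omega K w v]].

Definition sigma_perp (mu : {measure set V -> \bar R}) (Omega : set V)
  (N : nat) (phi : 'I_N -> V -> R) (K : V -> V -> R) (M : nat) : \bar R :=
  ereal_inf [set e | exists (w v : 'I_M -> V -> R),
    [/\ forall i, {within Omega, continuous (w i)},
        forall i, mu.-integrable Omega (EFin \o v i),
        forall i, orth_XN mu Omega phi (v i)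
      & e = sup_L1_err mu Omega K w v]].

End defs.

(* Main.v *)
Require Import Defs.
From HB Require Import structures.
From mathcomp Require Import all_boot all_order all_algebra.
From mathcomp Require Import all_classical all_reals all_analysis.
Import Order.TTheory GRing.Theory Num.Theory.
Import numFieldNormedType.Exports.
Local Open Scope classical_set_scope.
Local Open Scope ring_scope.

Section H.
Context (R : realType) (d : nat) (Omega : set (Rd R d)).
Hypothesis cO : compact Omega.

Lemma mOmega : measurable Omega.
Proof.
have clO : closed Omega by apply: compact_closed => //; exact: norm_hausdorff.
rewrite -(setCK Omega); apply: measurableC; apply: sub_sigma_algebra.
exact: closed_openC.
Qed.

Lemma mcont (f : Rd R d -> R) : {within Omega, continuous f} -> measurable_fun Omega f.
Proof.
move=> /continuousP cf; apply: (measurability _ (measurable_realfun.RGenOpens.measurableE R)).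
move=> _ [_ [a [b ->] <-]].
have /open_subspaceP [V oV VO] := cf _ (@interval_open R (BRight a) (BLeft b) isT isT).
rewrite setIC -VO; apply: measurableI; last exact: mOmega.
exact: sub_sigma_algebra.
Qed.

Lemma bcont (f : Rd R d -> R) : {within Omega, continuous f} -> [bounded f x | x in Omega].
Proof.
move=> cf; have := compact_bounded (continuous_compact cf cO).
move=> [M [Mr HM]]; exists M; split => // r Mr0 x Ox; apply: HM => //; by exists x.
Qed.
Local Notation V := (Rd R d).
Variable mu : {measure set V -> \bar R}.
Variables (N : nat) (phi : 'I_N -> V -> R).
Hypothesis cphi : forall j, {within Omega, continuous (phi j)}.

Lemma int_vphi v j : mu.-integrable Omega (EFin \o v) ->
  mu.-integrable Omega (EFin \o (fun y => v y * phi j y)).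
Proof.
move=> iv; have := integrableMl mOmega iv (@mcont _ (cphi j)) (@bcont _ (cphi j)).
apply: eq_integrable => //; exact: mOmega.
Qed.

Lemma lin_int M (g : 'I_M -> V -> R) (a : 'I_M -> R) :
  (forall i, mu.-integrable Omega (EFin \o g i)) ->
  mu.-integrable Omega (EFin \o (fun y => \sum_i a i * g i y)) /\
  (\int[mu]_(y in Omega) (\sum_i a i * g i y)%:E =
     \sum_i (a i)%:E * \int[mu]_(y in Omega) (g i y)%:E)%E.
Proof.
move=> ig; have mO := mOmega.
have ig' : forall i, mu.-integrable Omega (fun y => (a i)%:E * (g i y)%:E)%E.
  by move=> i; apply: integrableZl => //; try exact: mOmega; exact: ig.
have e : (EFin \o (fun y => \sum_i a i * g i y)) =
   (fun y => \sum_(i <- index_enum 'I_M | true) ((a i)%:E * (g i y)%:E))%E.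
  by apply/funext => y; rewrite /= -sumEFin.
split; first by rewrite e; apply: (integrable_sum mO) => i _; exact: ig'.
have -> : (fun y => (\sum_i a i * g i y)%:E) =
   (fun y => \sum_(i <- index_enum 'I_M | true) ((a i)%:E * (g i y)%:E))%E.
  by [].
rewrite (integral_sum mO) //.
by apply: eq_bigr => i _; rewrite integralZl //; exact: ig.
Qed.

Lemma int_comb_phi M (a : 'I_M -> R) (v : 'I_M -> V -> R) j :
  (forall i, mu.-integrable Omega (EFin \o v i)) ->
  (\int[mu]_(y in Omega) ((\sum_i a i * v i y) * phi j y)%:E =
   \sum_i (a i)%:E * \int[mu]_(y in Omega) (v i y * phi j y)%:E)%E.
Proof.
move=> iv.
have -> : (fun y => ((\sum_i a i * v i y) * phi j y)%:E) =
          (fun y => (\sum_i a i * (v i y * phi j y))%:E).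
  by apply/funext => y; rewrite mulr_suml; congr EFin; apply: eq_bigr => i _; rewrite mulrA.
exact: (@lin_int _ (fun i y => v i y * phi j y) a (fun i => @int_vphi _ j (iv i))).2.
Qed.

Lemma orth_iff v : mu.-integrable Omega (EFin \o v) ->
  orth_XN mu Omega phi v <->
  forall j, (\int[mu]_(y in Omega) (v y * phi j y)%:E = 0)%E.
Proof.
move=> iv; split.
  move=> h j; apply: h; exists (fun k => (k == j)%:R); apply/funext => y.
  rewrite (bigD1 j) //= eqxx mul1r big1 ?addr0 // => k /negbTE ->.
  by rewrite mul0r.
move=> h f [c ->].
have -> : (fun y => (v y * \sum_j c j * phi j y)%:E) =
          (fun y => (\sum_j c j * (v y * phi j y))%:E).
  by apply/funext => y; rewrite mulr_sumr; congr EFin; apply: eq_bigr => i _; rewrite mulrCA.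
rewrite (@lin_int _ (fun j y => v y * phi j y) c (fun j => @int_vphi _ j iv)).2.
by rewrite big1 // => j _; rewrite h mule0.
Qed.
Lemma main_eq (K : V -> V -> R) M :
  sigma_c mu Omega phi K M = sigma_perp mu Omega phi K M.
Proof.
rewrite /sigma_c /sigma_perp; congr ereal_inf.
apply/seteqP; split; last first.
  move=> e [w [v [cw iv ov ->]]]; exists w, v; split => // x Ox.
  apply/orth_iff; first exact: (@lin_int _ v (fun i => w i x) iv).1.
  move=> j; rewrite int_comb_phi //.
  by rewrite big1 // => i _; rewrite (proj1 (@orth_iff _ (iv i)) (ov i) j) mule0.
move=> e [w [v [cw iv ow ->]]].
pose A : 'M[R]_(M, N) := \matrix_(i, j) fine (\int[mu]_(y in Omega) (v i y * phi j y)%:E)%E.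
have Aint i j : ((A i j)%:E = \int[mu]_(y in Omega) (v i y * phi j y)%:E)%E.
  by rewrite mxE fineK // integrable_fin_num //; [exact: mOmega| exact: int_vphi].
pose B : 'M[R]_M := 1%:M - A *m pinvmx A.
have BA : B *m A = 0 by rewrite mulmxBl mul1mx mulmxKpV ?submx_refl // subrr.
pose v' k y := \sum_i B k i * v i y.
have iv' k : mu.-integrable Omega (EFin \o v' k).
  exact: (@lin_int _ v (fun i => B k i) iv).1.
have wA x : Omega x -> (\row_i w i x) *m A = 0.
  move=> Ox; apply/rowP => j; rewrite !mxE.
  apply: EFin_inj; rewrite -sumEFin.
  have := proj1 (@orth_iff _ (@lin_int _ v (fun i => w i x) iv).1) (ow x Ox) j.
  rewrite int_comb_phi // => h; apply: eq_trans h.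
  by apply: eq_bigr => i _; rewrite EFinM Aint mxE.
have eqW x y : Omega x -> \sum_k w k x * v' k y = \sum_i w i x * v i y.
  move=> Ox.
  have rB : (\row_i w i x) *m B = \row_i w i x.
    by rewrite mulmxBr mulmx1 mulmxA wA // mul0mx subr0.
  rewrite /v'; under eq_bigr do rewrite mulr_sumr.
  rewrite exchange_big /=; apply: eq_bigr => i _.
  under eq_bigr do rewrite mulrA; rewrite -mulr_suml; congr (_ * _).
  have := congr1 (fun m : 'M[R]_(1, M) => m ord0 i) rB; rewrite !mxE => <-.
  by apply: eq_bigr => k _; rewrite !mxE.
exists w, v'; split => //.
  move=> k; apply/orth_iff => // j.
  rewrite int_comb_phi //.
  under eq_bigr do rewrite -Aint.
  rewrite sumEFin.
  have h : \sum_i B k i * A i j = 0.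
    by have := congr1 (fun m : 'M[R]_(M, N) => m k j) BA; rewrite !mxE.
  by rewrite h.
rewrite /sup_L1_err; congr ereal_sup.
apply/seteqP; split => _ [x Ox <-]; exists x => //;
  by apply: eq_integral => y _; rewrite eqW.
Qed.
End H.

Theorem proposition3p1 (R : realType) (d : nat) (Omega : set (Rd R d))
  (mu : probability (Rd R d) R) (N : nat) (phi : 'I_N -> Rd R d -> R)
  (M : nat) (K : Rd R d -> Rd R d -> R) :
  compact Omega ->
  mu Omega = 1%E ->
  (forall j, {within Omega, continuous (phi j)}) ->
  (forall c : 'I_N -> R,
     {ae mu, forall y, Omega y -> \sum_(j < N) c j * phi j y = 0} ->
     forall j, c j = 0) ->
  {within Omega `*` Omega, continuous (fun p => K p.1 p.2)} ->
  sigma_c mu Omega phi K M = sigma_perp mu Omega phi K M.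
Proof.
move=> cO _ cphi _ _; exact: main_eq.
Qed.
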